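(* Let $\mathbb{X}$ be a finite-dimensional real Euclidean space and let $\boldsymbol{M}_1,\boldsymbol{M}_2:\mathbb{X}\rightrightarrows\mathbb{X}$ be such that $\boldsymbol{M}_1$, $\boldsymbol{M}_2$ and $\boldsymbol{M}_1+\boldsymbol{M}_2$ are maximal monotone and $\operatorname{Zer}(\boldsymbol{M}_1+\boldsymbol{M}_2)\neq\emptyset$. Let $\sigma>0$, $\eta^0\in\mathbb{X}$, and let $\{w^k,x^k,v^k,\eta^k\}_{k\ge1}$ be generated by the HPR iteration: for $k\ge0$, $w^{k+1}=\boldsymbol{J}_{\sigma\boldsymbol{M}_2}(\eta^k)$, $x^{k+1}=\boldsymbol{J}_{\sigma\boldsymbol{M}_1}(2w^{k+1}-\eta^k)$, $v^{k+1}=2x^{k+1}-(2w^{k+1}-\eta^k)$, $\eta^{k+1}=\frac{1}{k+2}\eta^0+\frac{k+1}{k+2}v^{k+1}$. Let $\eta^*:=\Pi_{\operatorname{Fix}(\mathbf{T}^{\rm PR}_\sigma)}(\eta^0)$ and $w^*:=\boldsymbol{J}_{\sigma\boldsymbol{M}_2}(\eta^* )$. Then $\eta^k\to\eta^*$, $v^k\to\eta^*$, $x^k\to w^*$, $w^k\to w^*$, and $w^*\in\operatorname{Zer}(\boldsymbol{M}_1+\boldsymbol{M}_2)$, i.e. $0\in\boldsymbol{M}_1w^*+\boldsymbol{M}_2w^*$.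
   Context: For a maximal monotone $\boldsymbol{M}$, $\boldsymbol{J}_{\boldsymbol{M}}:=(\boldsymbol{I}+\boldsymbol{M})^{-1}$ is its resolvent and $\boldsymbol{R}_{\boldsymbol{M}}:=2\boldsymbol{J}_{\boldsymbol{M}}-\boldsymbol{I}$ its reflected resolvent. The Peaceman–Rachford operator is $\mathbf{T}^{\rm PR}_\sigma:=\boldsymbol{R}_{\sigma\boldsymbol{M}_1}\circ\boldsymbol{R}_{\sigma\boldsymbol{M}_2}$, $\operatorname{Fix}(\cdot)$ is the set of fixed points, and $\Pi_C$ is the Euclidean projection onto a closed convex set $C$. *)

(* Defs.v *)
From HB Require Import structures.
From mathcomp Require Import all_boot all_order all_algebra.
From mathcomp Require Import all_classical all_reals all_analysis.
Set Implicit Arguments. Unset Strict Implicit. Unset Printing Implicit Defensive.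
Import Order.TTheory GRing.Theory Num.Theory.
Local Open Scope classical_set_scope.
Local Open Scope ring_scope.

(* The Euclidean space X is modelled as 'rV[R]_n with the standard inner product. *)
Definition dotv (R : realType) (n : nat) (u v : 'rV[R]_n) : R := (u *m v^T) 0 0.

Definition setop (R : realType) (n : nat) := 'rV[R]_n -> set 'rV[R]_n.

Definition monotone_op (R : realType) (n : nat) (M : setop R n) : Prop :=
  forall x y u v, M x u -> M y v -> 0 <= dotv (x - y) (u - v).

Definition maximal_monotone (R : realType) (n : nat) (M : setop R n) : Prop :=
  monotone_op M /\
  forall M' : setop R n, monotone_op M' -> (forall x u, M x u -> M' x u) ->
    forall x u, M' x u -> M x u.

Definition sum_op (R : realType) (n : nat) (M1 M2 : setop R n) : setop R n :=
  fun x => [set a + b | a in M1 x & b in M2 x].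

Definition scale_op (R : realType) (n : nat) (s : R) (M : setop R n) : setop R n :=
  fun x => [set s *: u | u in M x].

Definition zer (R : realType) (n : nat) (M : setop R n) : set 'rV[R]_n :=
  [set x | M x 0].

(* resolvent J_M := (I + M)^{-1}, as a set-valued operator *)
Definition resolvent (R : realType) (n : nat) (M : setop R n) : setop R n :=
  fun x => [set y | exists2 u, M y u & x = y + u].

Definition refl_resolvent (R : realType) (n : nat) (M : setop R n) : setop R n :=
  fun x => [set 2%:R *: y - x | y in resolvent M x].

Definition comp_op (R : realType) (n : nat) (A B : setop R n) : setop R n :=
  fun x => \bigcup_(y in B x) A y.

Definition T_PR (R : realType) (n : nat) (s : R) (M1 M2 : setop R n) : setop R n :=
  comp_op (refl_resolvent (scale_op s M1)) (refl_resolvent (scale_op s M2)).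

Definition Fix_op (R : realType) (n : nat) (T : setop R n) : set 'rV[R]_n :=
  [set x | T x x].

Definition is_proj (R : realType) (n : nat) (C : set 'rV[R]_n) (z p : 'rV[R]_n) : Prop :=
  C p /\ forall c, C c -> dotv (z - p) (z - p) <= dotv (z - c) (z - c).

(* Main.v *)
Require Import Defs.
From HB Require Import structures.
From mathcomp Require Import all_boot all_order all_algebra.
From mathcomp Require Import all_classical all_reals all_analysis.
From mathcomp Require Import ring lra.
Import Order.TTheory GRing.Theory Num.Theory.
Import numFieldNormedType.Exports.
Local Open Scope classical_set_scope.
Local Open Scope ring_scope.

Set Implicit Arguments. Unset Strict Implicit.


Section Dot.
Variables (R : realType) (n : nat).
Implicit Types (u v w : 'rV[R]_n) (a : R).

Lemma dotvE u v : dotv u v = \sum_i u 0 i * v 0 i.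
Proof. by rewrite /dotv !mxE; apply: eq_bigr => i _; rewrite mxE. Qed.

Lemma dotvC u v : dotv u v = dotv v u.
Proof. by rewrite !dotvE; apply: eq_bigr => i _; rewrite mulrC. Qed.

Lemma dotvDl u v w : dotv (u + v) w = dotv u w + dotv v w.
Proof. by rewrite !dotvE -big_split; apply: eq_bigr => i _; rewrite mxE mulrDl. Qed.

Lemma dotvDr u v w : dotv w (u + v) = dotv w u + dotv w v.
Proof. by rewrite dotvC dotvDl !(dotvC w). Qed.

Lemma dotvZl a u v : dotv (a *: u) v = a * dotv u v.
Proof. by rewrite !dotvE mulr_sumr; apply: eq_bigr => i _; rewrite mxE mulrA. Qed.

Lemma dotvZr a u v : dotv v (a *: u) = a * dotv v u.
Proof. by rewrite dotvC dotvZl dotvC. Qed.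

Lemma dotvNl u v : dotv (- u) v = - dotv u v.
Proof. by rewrite -scaleN1r dotvZl mulN1r. Qed.

Lemma dotvNr u v : dotv v (- u) = - dotv v u.
Proof. by rewrite dotvC dotvNl dotvC. Qed.

Lemma dotv_ge0 u : 0 <= dotv u u.
Proof. by rewrite dotvE; apply: sumr_ge0 => i _; rewrite -expr2 sqr_ge0. Qed.

Lemma coord_le_norm u i : `|u 0 i| <= `|u|.
Proof.
change (`|u 0 i| <= mx_norm u); rewrite mx_normrE; apply/bigmax_geP; right => /=.
by exists (0, i).
Qed.

Lemma norm_sq_le u : `|u| ^+ 2 <= dotv u u.
Proof.
change (mx_norm u ^+ 2 <= dotv u u).
have [->|/mx_norm_neq0 [[i j] /= Hi]] := eqVneq (mx_norm u) 0.
  by rewrite expr0n /= dotv_ge0.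
rewrite Hi (ord1 i) dotvE (bigD1 j) //= real_normK ?num_real //.
by rewrite expr2 lerDl; apply: sumr_ge0 => k _; rewrite -expr2 sqr_ge0.
Qed.

Lemma dotv_le u v : `|dotv u v| <= n%:R * (`|u| * `|v|).
Proof.
rewrite dotvE; apply: le_trans (ler_norm_sum _ _ _) _.
rewrite mulr_natl -[X in _ *+ X]card_ord -sumr_const; apply: ler_sum => i _.
by rewrite normrM ler_pM ?coord_le_norm.
Qed.

Lemma dotv0l v : dotv 0 v = 0.
Proof. by rewrite dotvE big1 // => i _; rewrite mxE mul0r. Qed.

Lemma dotv0r v : dotv v 0 = 0.
Proof. by rewrite dotvC dotv0l. Qed.

Lemma dotv_eq0 u : dotv u u <= 0 -> u = 0.
Proof.
move=> H; have H0 : dotv u u = 0 by apply/eqP; rewrite eq_le H dotv_ge0.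
apply/rowP => i; rewrite mxE.
move: H0; rewrite dotvE => /eqP; rewrite psumr_eq0 => [/allP/(_ i)|j _]; last by rewrite -expr2 sqr_ge0.
by rewrite mem_index_enum /= mulf_eq0 orbb => /(_ isT)/eqP.
Qed.

End Dot.

Ltac vec_eq := apply/rowP => ?; rewrite !mxE; ring.
Ltac dexp := rewrite ?(dotvDl, dotvDr, dotvNl, dotvNr, dotvZl, dotvZr).



Section Res.
Variables (R : realType) (n : nat).
Implicit Types (M : setop R n) (x y : 'rV[R]_n).

Lemma res_dest s M x y : resolvent (scale_op s M) x y -> exists2 b, M y b & x = y + s *: b.
Proof. by move=> [u [b Mb <-] ->]; exists b. Qed.

Lemma res_mk s M x y b : M y b -> x = y + s *: b -> resolvent (scale_op s M) x y.
Proof. by move=> Mb ->; exists (s *: b) => //; exists b. Qed.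

Lemma res_fne s M x x' y y' : monotone_op M -> 0 <= s ->
  resolvent (scale_op s M) x y -> resolvent (scale_op s M) x' y' ->
  dotv (y - y') (y - y') <= dotv (x - x') (x - x') /\
  dotv ((2%:R *: y - x) - (2%:R *: y' - x')) ((2%:R *: y - x) - (2%:R *: y' - x'))
    <= dotv (x - x') (x - x').
Proof.
move=> mono s0 /res_dest[b Mb ->] /res_dest[b' Mb' ->].
have h := mono _ _ _ _ Mb Mb'.
have e1 : y + s *: b - (y' + s *: b') = (y - y') + s *: (b - b') by vec_eq.
have e2 : (2%:R *: y - (y + s *: b)) - (2%:R *: y' - (y' + s *: b')) =
   (y - y') - s *: (b - b') by vec_eq.
rewrite e1 e2; move: h; move: (y - y') (b - b') => D E h.
have hE := dotv_ge0 E; have hD := dotv_ge0 D.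
dexp; rewrite (dotvC E D); split; nra.
Qed.

Lemma res_uniq s M x y y' : monotone_op M -> 0 <= s ->
  resolvent (scale_op s M) x y -> resolvent (scale_op s M) x y' -> y = y'.
Proof.
move=> mono s0 h h'; have [+ _] := res_fne mono s0 h h'.
by rewrite subrr dotv0l => /dotv_eq0 /eqP; rewrite subr_eq0 => /eqP.
Qed.

End Res.



Section Fix.
Variables (R : realType) (n : nat).
Implicit Types (M : setop R n) (x y z b : 'rV[R]_n).

Lemma dotvNN x y z b : dotv (x - z) (y - b) = dotv (z - x) (b - y).
Proof. by rewrite -(opprB z x) -(opprB b y) dotvNl dotvNr opprK. Qed.

Lemma maxmono_add M z b : maximal_monotone M ->
  (forall x u, M x u -> 0 <= dotv (z - x) (b - u)) -> M z b.
Proof.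
move=> [mono mx] H.
pose M' := fun x u => M x u \/ (x = z /\ u = b).
apply: (mx M') => [x y u v [h1|[-> ->]] [h2|[-> ->]]| x u h|]; rewrite /M'.
- exact: mono.
- by rewrite dotvNN; apply: H.
- exact: H.
- by rewrite !subrr dotv0l.
- by left.
- by right.
Qed.

Lemma conv_core (P0 P1 Q0 Q1 : 'rV[R]_n) (t : R) : 0 <= t <= 1 ->
  0 <= dotv P0 Q0 -> 0 <= dotv P1 Q1 -> 0 <= dotv (P0 - P1) (Q0 - Q1) ->
  0 <= dotv (P0 - P1) (- (Q0 - Q1)) ->
  0 <= dotv ((1 - t) *: P0 + t *: P1) ((1 - t) *: Q0 + t *: Q1).
Proof.
move=> /andP[t0 t1] h0 h1 k1 k2.
have e : dotv (P0 - P1) (Q0 - Q1) = 0 by apply/eqP; rewrite eq_le k1 andbT -oppr_ge0 -dotvNr.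
move: e; dexp => e.
have t1' : 0 <= 1 - t by lra.
have a0 := mulr_ge0 (mulr_ge0 t1' t1') h0.
have a1 := mulr_ge0 (mulr_ge0 t0 t0) h1.
have a2 := mulr_ge0 t1' t0.
have a3 := mulr_ge0 a2 h0.
have a4 := mulr_ge0 a2 h1.
nra.
Qed.

End Fix.

Section Tstep.
Variables (R : realType) (n : nat) (s : R) (M1 M2 : setop R n).
Hypothesis (hs : 0 < s) (hM1 : maximal_monotone M1) (hM2 : maximal_monotone M2).
Implicit Types (x y z b q : 'rV[R]_n).

Definition Tstep (a c : 'rV[R]_n) := exists w x,
  [/\ resolvent (scale_op s M2) a w, resolvent (scale_op s M1) (2%:R *: w - a) x
    & c = 2%:R *: x - (2%:R *: w - a)].

Lemma T_ne a a' c c' : Tstep a c -> Tstep a' c' ->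
  dotv (c - c') (c - c') <= dotv (a - a') (a - a').
Proof.
move=> [w [x [h1 h2 ->]]] [w' [x' [h1' h2' ->]]].
have s0 : 0 <= s by apply: ltW.
have [_ e1] := res_fne hM2.1 s0 h1 h1'.
have [_ e2] := res_fne hM1.1 s0 h2 h2'.
exact: le_trans e2 e1.
Qed.

Lemma fix_T q : Fix_op (T_PR s M1 M2) q -> Tstep q q.
Proof. by move=> [y [w hw <-] [x hx hq]]; exists w, x; split. Qed.

Lemma T_pair q : Tstep q q -> exists z b, [/\ M2 z b, M1 z (- b) & q = z + s *: b].
Proof.
move=> [w [x [/res_dest[b Mb eq1] /res_dest[a Ma eq2] eq3]]].
have ab : a = - b.
  apply/rowP => i; have := congr1 (fun M : 'rV[R]_n => M 0 i) eq1; have := congr1 (fun M : 'rV[R]_n => M 0 i) eq2;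
  have := congr1 (fun M : 'rV[R]_n => M 0 i) eq3; rewrite !mxE => e3 e2 e1.
  have : s * (a 0 i + b 0 i) = 0 by lra.
  by move/eqP; rewrite mulf_eq0 gt_eqF //= addr_eq0 => /eqP.
have wx : w = x.
  apply/rowP => i; have := congr1 (fun M : 'rV[R]_n => M 0 i) eq1; have := congr1 (fun M : 'rV[R]_n => M 0 i) eq2;
  have := congr1 (fun M : 'rV[R]_n => M 0 i) eq3; have := congr1 (fun M : 'rV[R]_n => M 0 i) ab; rewrite !mxE => e4 e3 e2 e1.
  lra.
by exists w, b; split => //; rewrite wx -ab.
Qed.

Lemma pair_fix z b : M2 z b -> M1 z (- b) -> Fix_op (T_PR s M1 M2) (z + s *: b).
Proof.
move=> h2 h1; exists (2%:R *: z - (z + s *: b)).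
  exists z => //; exact: res_mk h2 _.
exists z; first by apply: res_mk h1 _; vec_eq.
vec_eq.
Qed.

Lemma pair_conv z0 b0 z1 b1 t : 0 <= t <= 1 ->
  M2 z0 b0 -> M1 z0 (- b0) -> M2 z1 b1 -> M1 z1 (- b1) ->
  M2 ((1 - t) *: z0 + t *: z1) ((1 - t) *: b0 + t *: b1) /\
  M1 ((1 - t) *: z0 + t *: z1) (- ((1 - t) *: b0 + t *: b1)).
Proof.
move=> t01 a0 c0 a1 c1.
have k2 := hM2.1 _ _ _ _ a0 a1.
have k1 := hM1.1 _ _ _ _ c0 c1.
split; apply: maxmono_add => // x u h.
- have e1 : (1 - t) *: z0 + t *: z1 - x = (1 - t) *: (z0 - x) + t *: (z1 - x) by vec_eq.
  have e2 : (1 - t) *: b0 + t *: b1 - u = (1 - t) *: (b0 - u) + t *: (b1 - u) by vec_eq.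
  rewrite e1 e2; apply: conv_core => //.
  + by rewrite dotvNN; apply: hM2.1.
  + by rewrite dotvNN; apply: hM2.1.
  + have -> : z0 - x - (z1 - x) = z0 - z1 by vec_eq.
    by have -> : b0 - u - (b1 - u) = b0 - b1 by vec_eq.
  + have -> : z0 - x - (z1 - x) = z0 - z1 by vec_eq.
    by have -> : - (b0 - u - (b1 - u)) = - b0 - - b1 by vec_eq.
- have e1 : (1 - t) *: z0 + t *: z1 - x = (1 - t) *: (z0 - x) + t *: (z1 - x) by vec_eq.
  have e2 : - ((1 - t) *: b0 + t *: b1) - u = (1 - t) *: (- b0 - u) + t *: (- b1 - u) by vec_eq.
  rewrite e1 e2; apply: conv_core => //.
  + by rewrite dotvNN; apply: hM1.1.
  + by rewrite dotvNN; apply: hM1.1.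
  + have -> : z0 - x - (z1 - x) = z0 - z1 by vec_eq.
    by have -> : - b0 - u - (- b1 - u) = - b0 - - b1 by vec_eq.
  + have -> : z0 - x - (z1 - x) = z0 - z1 by vec_eq.
    by have -> : - (- b0 - u - (- b1 - u)) = b0 - b1 by vec_eq.
Qed.

End Tstep.



Section Proj.
Variables (R : realType) (n : nat) (s : R) (M1 M2 : setop R n).
Hypothesis (hs : 0 < s) (hM1 : maximal_monotone M1) (hM2 : maximal_monotone M2).

Lemma proj_ineq (e0 p q : 'rV[R]_n) :
  is_proj (Fix_op (T_PR s M1 M2)) e0 p -> Fix_op (T_PR s M1 M2) q ->
  dotv (e0 - p) (q - p) <= 0.
Proof.
move=> [pF pmin] qF.
have [z0 [b0 [a0 c0 ep]]] := T_pair hs (fix_T pF).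
have [z1 [b1 [a1 c1 eq]]] := T_pair hs (fix_T qF).
have key : forall t, 0 <= t <= 1 ->
    dotv (e0 - p) (e0 - p) <= dotv ((e0 - p) - t *: (q - p)) ((e0 - p) - t *: (q - p)).
  move=> t t01; have [h2 h1] := pair_conv hM1 hM2 t01 a0 c0 a1 c1.
  have := pmin _ (pair_fix s h2 h1).
  suff -> : e0 - ((1 - t) *: z0 + t *: z1 + s *: ((1 - t) *: b0 + t *: b1)) =
     (e0 - p) - t *: (q - p) by [].
  rewrite ep eq; vec_eq.
move: key; move: (e0 - p) (q - p) => P Q key.
rewrite leNgt; apply/negP => g0.
have Q0 := dotv_ge0 Q.
pose t := dotv P Q / (dotv P Q + dotv Q Q).
have ht : t * (dotv P Q + dotv Q Q) = dotv P Q by rewrite /t mulfVK // gt_eqF // ltr_wpDr.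
have t0 : 0 < t by rewrite /t divr_gt0 // ltr_wpDr.
have t1 : t <= 1 by rewrite /t ler_pdivrMr ?mul1r ?lerDl // ltr_wpDr.
have := key t; rewrite ltW ?t0 ?t1 // => /(_ isT); dexp; rewrite (dotvC Q P).
nra.
Qed.

End Proj.


Section Clus.
Variables (R : realType).

Lemma norm_lt_coord n (u : 'rV[R]_n) e : 0 < e -> (forall i, `|u 0 i| < e) -> `|u| < e.
Proof.
move=> e0 H; change (mx_norm u < e); rewrite mx_normrE.
apply/bigmax_ltP; split => // -[i j] _ /=; by rewrite (ord1 i).
Qed.

Lemma cluster_pair n (f g : nat -> 'rV[R]_n) (B : R) :
  (forall j i, `|f j 0 i| <= B) -> (forall j i, `|g j 0 i| <= B) ->
  exists q z, forall e, 0 < e -> forall N, exists j, [/\ (N <= j)%N, `|f j - q| < e & `|g j - z| < e].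
Proof.
move=> hf hg.
pose h j : 'rV[R]_(n + n) := row_mx (f j) (g j).
pose A := [set v : 'rV[R]_(n + n) | forall i, `[- B, B]%classic (v ord0 i)].
have cA : compact A by apply: (@rV_compact _ _ (fun=> `[- B, B]%classic)) => _; exact: segment_compact.
have FA : (h @ \oo) A.
  apply: filterS (nbhs_infty_ge 0) => j _ i /=; rewrite in_itv /= -ler_norml.
  rewrite -(fintype.splitK i); case: (fintype.split i) => k /=; rewrite /h ?row_mxEl ?row_mxEr //.
have [Q [_ clQ]] := cA _ _ FA.
exists (\row_i Q 0 (lshift n i)), (\row_i Q 0 (rshift n i)) => e e0 N.
have FN : (h @ \oo) [set Z | exists2 j, (N <= j)%N & Z = h j].
  by apply: filterS (nbhs_infty_ge N) => j Nj; exists j.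
have [Z [[j Nj ->] hb]] := clQ _ _ FN (nbhsx_ballx (Q : 'rV[R]_(n + n)) e e0).
move: hb; rewrite -ball_normE /ball_ /= => hb.
exists j; split => //; apply: norm_lt_coord => // i; rewrite !mxE distrC.
- have := le_lt_trans (coord_le_norm _ (lshift n i)) hb.
  by rewrite /h mxE [X in _ + X]mxE row_mxEl.
- have := le_lt_trans (coord_le_norm _ (rshift n i)) hb.
  by rewrite /h mxE [X in _ + X]mxE row_mxEr.
Qed.

End Clus.



Definition ev (P : nat -> Prop) := exists N, forall k, (N <= k)%N -> P k.

Lemma ev_S P : ev (fun j => P j.+1) -> ev P.
Proof. by move=> [N h]; exists N.+1 => -[|k] // /h. Qed.

Lemma ev_and P Q : ev P -> ev Q -> ev (fun k => P k /\ Q k).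
Proof.
move=> [N1 h1] [N2 h2]; exists (maxn N1 N2) => k; rewrite geq_max => /andP[a b].
by split; [apply: h1 | apply: h2].
Qed.

Section Gen.
Variables (R : realType) (n : nat).
Implicit Types (x y u : 'rV[R]_n).

Lemma conv_sq (a b : R) x y : 0 <= a -> 0 <= b -> a + b = 1 ->
  dotv (a *: x + b *: y) (a *: x + b *: y) <= a * dotv x x + b * dotv y y.
Proof.
move=> a0 b0 ab; have -> : b = 1 - a by lra.
have h := dotv_ge0 (x - y).
have hp := mulr_ge0 (mulr_ge0 a0 b0) h.
move: hp; rewrite -[b]/(b) (_ : b = 1 - a) ?ab; last by lra.
dexp; rewrite (dotvC y x) => hp; nra.
Qed.

Lemma sq_add_le x y : dotv (x + y) (x + y) <= 2 * dotv x x + 2 * dotv y y.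
Proof.
have h := dotv_ge0 (x - y); move: h; dexp; rewrite (dotvC y x) => h; nra.
Qed.

Lemma dotvNN1 x : dotv (- x) (- x) = dotv x x.
Proof. by rewrite dotvNl dotvNr opprK. Qed.

Lemma ev_cvg (s : nat -> 'rV[R]_n) l :
  (forall e, 0 < e -> ev (fun k => dotv (s k - l) (s k - l) <= e)) ->
  s k @[k --> \oo] --> l.
Proof.
move=> H; apply/cvgrPdist_lt => eps eps0.
have [N hN] := H (eps ^+ 2 / 2) (divr_gt0 (exprn_gt0 _ eps0) (ltr0Sn R 1)).
apply: filterS (nbhs_infty_ge N) => k /hN hk.
have := norm_sq_le (s k - l); rewrite distrC => h.
have h0 := normr_ge0 (s k - l).
nra.
Qed.

Lemma coord_bound u c (D : R) : dotv (u - c) (u - c) <= D -> forall i, `|u 0 i| <= `|c| + 1 + D.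
Proof.
move=> H i; have -> : u 0 i = c 0 i + (u - c) 0 i by rewrite !mxE; ring.
apply: le_trans (ler_normD _ _) _.
have h1 := coord_le_norm c i; have h2 := coord_le_norm (u - c) i.
have h3 := norm_sq_le (u - c); have h4 := normr_ge0 (u - c).
nra.
Qed.

Lemma approx_ge u x (c : R) :
  (forall d, 0 < d -> exists u' x', [/\ `|u - u'| <= d, `|x - x'| <= d & c <= dotv u' x']) ->
  c <= dotv u x.
Proof.
move=> H; apply/ler_addgt0Pr => e e0.
pose K := n%:R * (`|x| + 1 + `|u|) + 1.
have K0 : 0 < K by rewrite /K ltr_pwDr // mulr_ge0 // addr_ge0 // addr_ge0.
pose d := Num.min 1 (e / K).
have d0 : 0 < d by rewrite /d lt_min ltr01 divr_gt0.
have d1 : d <= 1 by rewrite /d ge_min lexx.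
have dK : d * K <= e by rewrite /d -ler_pdivlMr // ge_min lexx orbT.
have [u' [x' [hu hx hc]]] := H d d0.
have e1 : dotv u x = dotv u' x' + dotv (u - u') x' + dotv u (x - x').
  by dexp; ring.
have b1 := dotv_le (u - u') x'; have b2 := dotv_le u (x - x').
have nx' : `|x'| <= `|x| + d.
  have -> : x' = x - (x - x') by rewrite opprB addrC subrK.
  by apply: le_trans (ler_normB _ _) _; rewrite lerD2l.
have n0 : 0 <= n%:R :> R by [].
have hu0 := normr_ge0 (u - u'); have hx0 := normr_ge0 (x - x'); have hn := normr_ge0 u.
have hnx := normr_ge0 x; have hnx' := normr_ge0 x'.
have t1 : `|dotv (u - u') x'| <= d * (n%:R * (`|x| + 1)).
  have p1 : `|u - u'| * `|x'| <= d * (`|x| + 1) by apply: ler_pM => //; lra.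
  by apply: le_trans b1 _; rewrite [X in _ <= X]mulrCA; apply: ler_wpM2l.
have t2 : `|dotv u (x - x')| <= d * (n%:R * `|u|).
  have p1 : `|u| * `|x - x'| <= d * `|u| by rewrite mulrC; apply: ler_wpM2r.
  by apply: le_trans b2 _; rewrite [X in _ <= X]mulrCA; apply: ler_wpM2l.
have := ler_norm (- dotv (u - u') x'); have := ler_norm (- dotv u (x - x')); rewrite !normrN.
rewrite e1; move: dK; rewrite /K; nra.
Qed.

End Gen.

Section Seq.
Variable R : realType.

Lemma inv_ev (C : R) : 0 <= C -> forall e, 0 < e -> ev (fun j => C / j.+1%:R <= e).
Proof.
move=> C0 e e0; exists (Num.truncn (C / e)) => j hj.
have h := Num.Theory.truncnS_gt (C / e).
have : (Num.truncn (C / e)).+1%:R <= j.+1%:R :> R by rewrite ler_nat ltnS.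
move=> h2; rewrite ler_pdivrMr // mulrC -ler_pdivrMr //; exact: ltW (lt_le_trans h h2).
Qed.

Lemma xu (c : nat) (a d : nat -> R) : (forall k, 0 <= a k) ->
  (forall e, 0 < e -> ev (fun k => d k <= e)) ->
  (forall k, (k + c).+1%:R * a k.+1 <= (k + c)%:R * a k + d k) ->
  forall e, 0 < e -> ev (fun k => a k <= e).
Proof.
move=> a0 hd rec e e0.
have e20 : 0 < e / 2 by rewrite divr_gt0.
have [N hN] := hd _ e20.
have ind : forall m, (N + m + c)%:R * a (N + m)%N <= (N + c)%:R * a N + m%:R * (e / 2).
  elim => [|m IH].
    by rewrite !addn0 mul0r addr0.
  have := rec (N + m)%N; rewrite addnS addSn.
  have := hN (N + m)%N (leq_addr _ _).
  rewrite -addnA (addnC m c) addnA.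
  move: IH; rewrite -addnA (addnC m c) addnA => IH.
  rewrite -[m.+1]addn1 natrD; lra.
set X := (N + c)%:R * a N.
have X0 : 0 <= X by rewrite mulr_ge0.
pose K := Num.truncn (X / (e / 2)).
have hK := Num.Theory.truncnS_gt (X / (e / 2)).
exists (N + K.+1)%N => k hk.
have [m km] : exists m, k = (N + m)%N by exists (k - N)%N; rewrite subnKC // (leq_trans _ hk) // leq_addr.
subst k.
have Km : (K.+1 <= m)%N by move: hk; rewrite leq_add2l.
have h1 := ind m; rewrite -/X in h1.
have h2 : K.+1%:R <= m%:R :> R by rewrite ler_nat.
have h3 : m%:R <= (N + m + c)%:R :> R by rewrite ler_nat (addnC N) -addnA leq_addr.
have h4 : X < K.+1%:R * (e / 2) by rewrite -ltr_pdivrMr.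
have h5 : 0 <= a (N + m)%N := a0 _.
have h6 : (N + m + c)%:R * a (N + m)%N < (N + m + c)%:R * e.
  have := ler_wpM2r (ltW e20) h2; have := ler_wpM2r (ltW e0) h3; lra.
have h7 : 0 <= (N + m + c)%:R :> R by [].
rewrite leNgt; apply/negP => h8; nra.
Qed.

End Seq.



Lemma natrS' (R : realType) k : k.+1%:R = k%:R + 1 :> R.
Proof. by rewrite -addn1 natrD. Qed.

Lemma inv3_sq (R : realType) (J : nat) (Q C : R) : 0 <= Q -> Q <= C ->
  (J.+3%:R)^-1 * ((J.+3%:R)^-1 * Q) <= C / J.+1%:R.
Proof.
move=> Q0 QC; rewrite ler_pdivlMr //.
have hJ : 0 <= J%:R :> R by [].
set m := (J.+3%:R)^-1.
have m0 : 0 <= m by rewrite /m invr_ge0.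
have hm : m * J.+3%:R = 1 by rewrite /m mulVf // pnatr_eq0.
rewrite !natrS' in hm.
rewrite natrS'.
have C0 : 0 <= C by apply: le_trans QC.
have h1 : m * (m * Q) * (J%:R + 1) <= m * (m * C) * (J%:R + 1).
  by apply: ler_wpM2r; [lra | apply: ler_wpM2l => //; apply: ler_wpM2l].
apply: le_trans h1 _.
have h2 : m * (m * (J%:R + 1)) <= 1 by nra.
nra.
Qed.

Section Main.
Variables (R : realType) (n : nat) (M1 M2 : setop R n).
Hypotheses (hM1 : maximal_monotone M1) (hM2 : maximal_monotone M2).
Variables (sigma : R) (w x v eta : nat -> 'rV[R]_n).
Hypothesis (hsigma : 0 < sigma).
Hypothesis (hw : forall k, resolvent (scale_op sigma M2) (eta k) (w k.+1))
  (hx : forall k, resolvent (scale_op sigma M1) (2%:R *: w k.+1 - eta k) (x k.+1))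
  (hv : forall k, v k.+1 = 2%:R *: x k.+1 - (2%:R *: w k.+1 - eta k))
  (heta : forall k, eta k.+1 =
     (k.+2%:R)^-1 *: eta 0%N + (k.+1%:R / k.+2%:R) *: v k.+1).
Variables (etastar wstar : 'rV[R]_n).
Hypotheses (hetastar : is_proj (Fix_op (T_PR sigma M1 M2)) (eta 0%N) etastar)
  (hwstar : resolvent (scale_op sigma M2) etastar wstar).

Local Notation p := etastar.

Lemma vT k : Tstep sigma M1 M2 (eta k) (v k.+1).
Proof. by exists (w k.+1), (x k.+1); split. Qed.

Lemma pT : Tstep sigma M1 M2 p p.
Proof. exact: fix_T hetastar.1. Qed.

Let D := dotv (eta 0 - p) (eta 0 - p).
Let lam k : R := (k.+2%:R)^-1.

Lemma lam0 k : 0 <= lam k. Proof. by rewrite /lam invr_ge0. Qed.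
Lemma lam1 k : 0 <= 1 - lam k.
Proof. by rewrite subr_ge0 /lam invf_le1 // ler1n. Qed.

Lemma heta' k : eta k.+1 = lam k *: eta 0 + (1 - lam k) *: v k.+1.
Proof.
rewrite heta /lam; congr (_ + _ *: _).
rewrite !natrS'; field.
by rewrite -!natrS' pnatr_eq0.
Qed.

Lemma bnd k : dotv (eta k - p) (eta k - p) <= D.
Proof.
elim: k => [|k IH]; first by rewrite lexx.
rewrite heta'.
have -> : lam k *: eta 0 + (1 - lam k) *: v k.+1 - p =
   lam k *: (eta 0 - p) + (1 - lam k) *: (v k.+1 - p) by vec_eq.
apply: le_trans (conv_sq _ _ (lam0 k) (lam1 k) _) _; first by ring.
have h := le_trans (T_ne hsigma hM1 hM2 (vT k) pT) IH.
have := ler_wpM2l (lam1 k) h; rewrite -/D; lra.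
Qed.

Lemma vbnd k : dotv (v k.+1 - p) (v k.+1 - p) <= D.
Proof. exact: le_trans (T_ne hsigma hM1 hM2 (vT k) pT) (bnd k). Qed.

Lemma D0 : 0 <= D. Proof. exact: dotv_ge0. Qed.

Lemma e0v k : dotv (eta 0 - v k.+1) (eta 0 - v k.+1) <= 4 * D.
Proof.
have -> : eta 0 - v k.+1 = (eta 0 - p) + - (v k.+1 - p) by vec_eq.
apply: le_trans (sq_add_le _ _) _; rewrite dotvNN1.
have := vbnd k; rewrite -/D; lra.
Qed.

Let a j := dotv (eta j.+2 - eta j.+1) (eta j.+2 - eta j.+1).

Lemma rec_a j : (j + 3).+1%:R * a j.+1 <= (j + 3)%:R * a j + 4 * D / j.+1%:R.
Proof.
set L := lam j.+2; set mu : R := (j.+3%:R)^-1.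
have E : eta j.+3 - eta j.+2 =
   (1 - L) *: (v j.+3 - v j.+2) + L *: (- mu *: (eta 0 - v j.+2)).
  rewrite (heta' j.+2) (heta' j.+1) /L /mu /lam; apply/rowP => i; rewrite !mxE.
  rewrite !natrS'; field.
  by rewrite -!natrS' !pnatr_eq0.
have c1 := @conv_sq R n (1 - L) L (v j.+3 - v j.+2) (- mu *: (eta 0 - v j.+2)) (lam1 j.+2) (lam0 j.+2) (ltac:(ring)).
rewrite -E in c1.
have XX : dotv (v j.+3 - v j.+2) (v j.+3 - v j.+2) <= a j := T_ne hsigma hM1 hM2 (vT j.+2) (vT j.+1).
have YY : dotv (- mu *: (eta 0 - v j.+2)) (- mu *: (eta 0 - v j.+2)) <= 4 * D / j.+1%:R.
  rewrite dotvZl dotvZr !mulNr !mulrN opprK; apply: inv3_sq; [exact: dotv_ge0 | exact: e0v].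
rewrite addn3.
have J0 : 0 <= j%:R :> R by [].
have hL : j.+4%:R * L = 1 by rewrite /L /lam mulfV // pnatr_eq0.
have s1 := ler_wpM2l (ler0n R j.+4) c1.
have s2 : j.+4%:R * ((1 - L) * dotv (v j.+3 - v j.+2) (v j.+3 - v j.+2) +
   L * dotv (- mu *: (eta 0 - v j.+2)) (- mu *: (eta 0 - v j.+2))) =
   j.+3%:R * dotv (v j.+3 - v j.+2) (v j.+3 - v j.+2) +
   dotv (- mu *: (eta 0 - v j.+2)) (- mu *: (eta 0 - v j.+2)).
  by rewrite mulrDr !mulrA mulrBr mulr1 hL mul1r [j.+4%:R]natrS' addrK.
have s3 := ler_wpM2l (ler0n R j.+3) XX.
rewrite s2 in s1; apply: le_trans s1 _; exact: lerD.
Qed.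

Lemma a_ge0 j : 0 <= a j. Proof. exact: dotv_ge0. Qed.

Lemma a_ev e : 0 < e -> ev (fun j => a j <= e).
Proof.
apply: (@xu R 3 a (fun j => 4 * D / j.+1%:R) a_ge0 _ rec_a).
by apply: inv_ev; rewrite mulr_ge0 // D0.
Qed.

Lemma r_ev e : 0 < e -> ev (fun k => dotv (eta k - v k.+1) (eta k - v k.+1) <= e).
Proof.
move=> e0; apply: ev_S.
have e4 : 0 < e / 4 by rewrite divr_gt0.
have [N hN] := ev_and (a_ev e4) (inv_ev (mulr_ge0 (ler0n R 4) D0) e4).
exists N => j /hN [h1 h2].
have -> : eta j.+1 - v j.+2 = - (eta j.+2 - eta j.+1) + lam j.+1 *: (eta 0 - v j.+2).
  rewrite [in RHS](heta' j.+1); vec_eq.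
apply: le_trans (sq_add_le _ _) _; rewrite dotvNN1 dotvZl dotvZr.
have h3 : lam j.+1 * (lam j.+1 * dotv (eta 0 - v j.+2) (eta 0 - v j.+2)) <= 4 * D / j.+1%:R.
  by apply: inv3_sq; [exact: dotv_ge0 | exact: e0v].
rewrite -/(a j); have h4 := le_trans h3 h2; move: h1 h4; move: (a j) (lam j.+1 * _) => A X h1 h4; lra.
Qed.

Lemma xw_ev e : 0 < e -> ev (fun k => dotv (x k.+1 - w k.+1) (x k.+1 - w k.+1) <= e).
Proof.
move=> e0; have [N hN] := r_ev e0; exists N => k /hN h.
have -> : x k.+1 - w k.+1 = (2%:R^-1 : R) *: - (eta k - v k.+1).
  by rewrite hv; apply/rowP => i; rewrite !mxE; field.
rewrite dotvZl dotvZr dotvNN1.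
have := dotv_ge0 (eta k - v k.+1); move: h; move: (dotv _ _) => X h X0; lra.
Qed.

Lemma g_ev e : 0 < e -> ev (fun k => dotv (eta 0 - p) (eta k - p) <= e).
Proof.
move=> e0; apply: contrapT => nev.
have bad : forall N, exists k, (N <= k)%N /\ e < dotv (eta 0 - p) (eta k - p).
  move=> N; apply: contrapT => h; apply: nev; exists N => k Nk.
  by rewrite leNgt; apply/negP => gk; apply: h; exists k.
have [phi hphi] := choice bad.
pose B := `|p| + `|wstar| + 1 + D.
have bf : forall j i, `|eta (phi j) 0 i| <= B.
  move=> j i; apply: le_trans (coord_bound (bnd _) i) _.
  have := normr_ge0 wstar; rewrite /B; lra.
have bg : forall j i, `|w (phi j).+1 0 i| <= B.
  move=> j i.
  have h := le_trans (res_fne hM2.1 (ltW hsigma) (hw (phi j)) hwstar).1 (bnd (phi j)).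
  apply: le_trans (coord_bound h i) _.
  have := normr_ge0 p; rewrite /B; lra.
have [q [z hc]] := cluster_pair bf bg.
have approx : forall d, 0 < d -> forall N, exists k,
    [/\ (N <= k)%N, `|eta k - q| < d, `|w k.+1 - z| < d & e < dotv (eta 0 - p) (eta k - p)].
  move=> d d0 N; have [j [Nj h1 h2]] := hc d d0 N.
  have [Nphi gphi] := hphi j.
  by exists (phi j); split => //; exact: leq_trans Nj Nphi.
have s0 : sigma != 0 by rewrite gt_eqF.
pose b := sigma^-1 *: (q - z).
have ge : e <= dotv (eta 0 - p) (q - p).
  apply: approx_ge => d d0.
  have [k [_ h1 _ h3]] := approx d d0 0%N.
  exists (eta 0 - p), (eta k - p); split; last exact: ltW.
  - by rewrite subrr normr0 ltW.
  - have -> : q - p - (eta k - p) = - (eta k - q) by vec_eq.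
    by rewrite normrN ltW.
have dd : forall d, 0 < d -> [/\ 0 < Num.min (d / 2) (sigma * d / 3),
    Num.min (d / 2) (sigma * d / 3) <= d / 2 & Num.min (d / 2) (sigma * d / 3) <= sigma * d / 3].
  move=> d d0; split; first by rewrite lt_min !divr_gt0 ?mulr_gt0.
  by rewrite ge_min lexx.
  by rewrite ge_min lexx orbT.
have hM2z : M2 z b.
  apply: (maxmono_add hM2) => y u hyu.
  apply: approx_ge => d d0.
  have [d'0 d'1 d'2] := dd d d0.
  set d' := Num.min _ _ in d'0 d'1 d'2.
  have [k [_ h1 h2 _]] := approx d' d'0 0%N.
  have [bk Mbk ek] := res_dest (hw k).
  exists (w k.+1 - y), (bk - u); split.
  - have -> : z - y - (w k.+1 - y) = - (w k.+1 - z) by vec_eq.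
    rewrite normrN; apply: ltW; apply: lt_le_trans h2 _; lra.
  - have -> : b - u - (bk - u) = sigma^-1 *: (- (eta k - q) + (w k.+1 - z)).
      rewrite /b ek; apply/rowP => i; rewrite !mxE; field; done.
    rewrite normrZ ger0_norm; last by rewrite invr_ge0 ltW.
    rewrite mulrC ler_pdivrMr //.
    apply: le_trans (ler_normD _ _) _; rewrite normrN.
    have := ltW h1; have := ltW h2; move: (`|_|) (`|_|) => A1 A2 a1 a2.
    move: d'2; nra.
  - exact: hM2.1.
have hM1z : M1 z (- b).
  apply: (maxmono_add hM1) => y u hyu.
  apply: approx_ge => d d0.
  have [d'0 d'1 d'2] := dd d d0.
  set d' := Num.min _ _ in d'0 d'1 d'2.
  have [N hN] := xw_ev (exprn_gt0 2 d'0).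
  have [k [Nk h1 h2 _]] := approx d' d'0 N.
  have hxw : `|x k.+1 - w k.+1| <= d'.
    have := norm_sq_le (x k.+1 - w k.+1); have := hN k Nk.
    have := normr_ge0 (x k.+1 - w k.+1); move: (`|_|) (dotv _ _) => A X; nra.
  have [ak Mak ek] := res_dest (hx k).
  exists (x k.+1 - y), (ak - u); split.
  - have -> : z - y - (x k.+1 - y) = - (w k.+1 - z) - (x k.+1 - w k.+1) by vec_eq.
    apply: le_trans (ler_normB _ _) _; rewrite normrN.
    have := ltW h2; move: hxw; move: (`|_|) (`|_|) => A1 A2 a1 a2; lra.
  - have -> : - b - u - (ak - u) =
        sigma^-1 *: ((eta k - q) - (w k.+1 - z) + (x k.+1 - w k.+1)).
      have ek' : ak = sigma^-1 *: (2%:R *: w k.+1 - eta k - x k.+1).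
        rewrite ek; apply/rowP => i; rewrite !mxE; field; done.
      rewrite /b ek'; apply/rowP => i; rewrite !mxE; field; done.
    rewrite normrZ ger0_norm; last by rewrite invr_ge0 ltW.
    rewrite mulrC ler_pdivrMr //.
    apply: le_trans (ler_normD _ _) _.
    apply: le_trans (lerD (ler_normB _ _) (lexx _)) _.
    have := ltW h1; have := ltW h2; move: hxw d'2; move: (`|_|) (`|_|) (`|_|) => A1 A2 A3; nra.
  - exact: hM1.1.
have qF : Fix_op (T_PR sigma M1 M2) q.
  have -> : q = z + sigma *: b by rewrite /b scalerA mulfV // scale1r addrC subrK.
  exact: pair_fix.
have := proj_ineq hsigma hM1 hM2 hetastar qF; lra.
Qed.

Lemma b_rec k : (k + 1).+1%:R * dotv (eta k.+1 - p) (eta k.+1 - p) <=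
  (k + 1)%:R * dotv (eta k - p) (eta k - p) + 2 * dotv (eta 0 - p) (eta k.+1 - p).
Proof.
have VB := T_ne hsigma hM1 hM2 (vT k) pT.
have E : eta k.+1 - p = lam k *: (eta 0 - p) + (1 - lam k) *: (v k.+1 - p).
  by rewrite heta'; vec_eq.
rewrite E; move: VB; move: (dotv (eta k - p) (eta k - p)) => bb VB.
move: VB; move: (eta 0 - p) (v k.+1 - p) => P V VB.
have PP := dotv_ge0 P; have VV := dotv_ge0 V.
dexp; rewrite (dotvC V P).
move: VB PP VV; move: (dotv P P) (dotv P V) (dotv V V) => pp pv vv VB PP VV.
have hL : (k + 1).+1%:R * lam k = 1 by rewrite addn1 /lam mulfV // pnatr_eq0.
have hK : (k + 1).+1%:R = (k + 1)%:R + 1 :> R by rewrite natrS'.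
have K00 : 0 <= (k + 1)%:R :> R by [].
move: hL hK (lam0 k) (lam1 k) K00; move: (lam k) ((k + 1).+1%:R) ((k + 1)%:R) => L K1 K0 hL hK L0 L1 K00.
set LHS := K1 * _.
have eq : LHS - (L * pp + 2 * (1 - L) * pv + K0 * ((1 - L) * vv)) =
   (K1 * L - 1) * (L * pp + 2 * (1 - L) * pv - (1 - L) * vv) + (K1 - K0 - 1) * ((1 - L) * vv).
  rewrite /LHS; ring.
rewrite hL hK subrr mul0r add0r (_ : K0 + 1 - K0 - 1 = 0) ?mul0r in eq; last by ring.
have h1 : K0 * ((1 - L) * vv) <= K0 * bb.
  apply: ler_wpM2l => //; have := mulr_ge0 L0 VV; lra.
have h2 := mulr_ge0 L0 PP.
rewrite -[2 * (1 - L) * pv]mulrA in eq.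
move: eq h1 h2; move: LHS (K0 * ((1 - L) * vv)) (K0 * bb) (L * pp) ((1 - L) * pv) => X A B C F.
move=> eq h1 h2; lra.
Qed.

Lemma b_ev e : 0 < e -> ev (fun k => dotv (eta k - p) (eta k - p) <= e).
Proof.
apply: (@xu R 1 (fun k => dotv (eta k - p) (eta k - p))
   (fun k => 2 * dotv (eta 0 - p) (eta k.+1 - p))).
- by move=> k; exact: dotv_ge0.
- move=> e1 e10; have [N hN] := g_ev (divr_gt0 e10 (ltr0Sn R 1)).
  exists N => k Nk; have := hN k.+1 (leqW Nk).
  move: (dotv _ _) => g; lra.
- exact: b_rec.
Qed.

Lemma concl :
  eta k @[k --> \oo] --> etastar /\
  v k @[k --> \oo] --> etastar /\
  x k @[k --> \oo] --> wstar /\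
  w k @[k --> \oo] --> wstar /\
  zer (sum_op M1 M2) wstar.
Proof.
have wb : forall k, dotv (w k.+1 - wstar) (w k.+1 - wstar) <= dotv (eta k - p) (eta k - p).
  by move=> k; exact: (res_fne hM2.1 (ltW hsigma) (hw k) hwstar).1.
split; first exact: ev_cvg b_ev.
split.
  apply: ev_cvg => e e0; apply: ev_S.
  have e4 : 0 < e / 4 by rewrite divr_gt0.
  have [N hN] := ev_and (r_ev e4) (b_ev e4).
  exists N => k /hN [h1 h2].
  have -> : v k.+1 - p = - (eta k - v k.+1) + (eta k - p) by vec_eq.
  apply: le_trans (sq_add_le _ _) _; rewrite dotvNN1.
  move: h1 h2; move: (dotv _ _) (dotv _ _) => A B; lra.
split.
  apply: ev_cvg => e e0; apply: ev_S.
  have e4 : 0 < e / 4 by rewrite divr_gt0.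
  have [N hN] := ev_and (xw_ev e4) (b_ev e4).
  exists N => k /hN [h1 h2].
  have -> : x k.+1 - wstar = (x k.+1 - w k.+1) + (w k.+1 - wstar) by vec_eq.
  apply: le_trans (sq_add_le _ _) _.
  have h3 := le_trans (wb k) h2.
  move: h1 h3; move: (dotv _ _) (dotv _ _) => A B; lra.
split.
  apply: ev_cvg => e e0; apply: ev_S.
  have [N hN] := b_ev e0.
  by exists N => k /hN h; exact: le_trans (wb k) h.
have [z [b [h2 h1 ep]]] := T_pair hsigma pT.
have zw : z = wstar.
  apply: (res_uniq hM2.1 (ltW hsigma) _ hwstar).
  exact: res_mk h2 ep.
rewrite -zw /zer /sum_op /=.
exists (- b) => //; exists b => //; exact: addNr.
Qed.

End Main.

Unset Implicit Arguments. Set Strict Implicit.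

Theorem corollary3p2 (R : realType) (n : nat) (M1 M2 : setop R n)
  (hM1 : maximal_monotone M1) (hM2 : maximal_monotone M2)
  (hM12 : maximal_monotone (sum_op M1 M2))
  (hzer : zer (sum_op M1 M2) !=set0)
  (sigma : R) (hsigma : 0 < sigma)
  (w x v eta : nat -> 'rV[R]_n)
  (hw : forall k, resolvent (scale_op sigma M2) (eta k) (w k.+1))
  (hx : forall k, resolvent (scale_op sigma M1) (2%:R *: w k.+1 - eta k) (x k.+1))
  (hv : forall k, v k.+1 = 2%:R *: x k.+1 - (2%:R *: w k.+1 - eta k))
  (heta : forall k, eta k.+1 =
     (k.+2%:R)^-1 *: eta 0%N + (k.+1%:R / k.+2%:R) *: v k.+1)
  (etastar wstar : 'rV[R]_n)
  (hetastar : is_proj (Fix_op (T_PR sigma M1 M2)) (eta 0%N) etastar)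
  (hwstar : resolvent (scale_op sigma M2) etastar wstar) :
  eta k @[k --> \oo] --> etastar /\
  v k @[k --> \oo] --> etastar /\
  x k @[k --> \oo] --> wstar /\
  w k @[k --> \oo] --> wstar /\
  zer (sum_op M1 M2) wstar.
Proof.
exact: (concl hM1 hM2 hsigma hw hx hv heta hetastar hwstar).
Qed.
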